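(* Let $G$ be a closed subgroup of $S_\infty$. Then there is a good quantifier $Q_G$ of type $\langle 2\rangle$ on $\mathbb{N}$ with $\mathrm{Aut}(Q_G)=G$.
   Context: $S_\infty$ is the group of permutations of $\mathbb{N}$ with the topology of pointwise convergence. A quantifier of type $\langle k\rangle$ on $\mathbb{N}$ is a set $Q\subseteq 2^{\mathbb{N}^k}$ (a family of subsets of $\mathbb{N}^k$; $2^{\mathbb{N}^k}$ carries the product topology). $Q$ is downwards closed if it is closed under subsets. For a map $p$ and $A\subseteq\mathbb{N}^k$, $p(A)=\{(p(a_1),\dots,p(a_k)):(a_1,\dots,a_k)\in A\}$. For $Q$ closed and downwards closed, a function $p:n\to\mathbb{N}$ is compatible with $Q$ if for every $A\subseteq n^k$, $A\in Q\iff p(A)\in Q$. A permutation $f$ of $\mathbb{N}$ fixes $Q$ if $A\in Q\iff f(A)\in Q$ for all $A\subseteq\mathbb{N}^k$; $\mathrm{Aut}(Q)$ is the group of such permutations. $Q$ is good if it is closed, downwards closed, and every finite injection $p:n\to\mathbb{N}$ compatible with $Q$ extends to a permutation of $\mathbb{N}$ fixing $Q$. *)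

(* Defs.v *)
From Stdlib Require Import Arith.

Definition is_perm (f : nat -> nat) : Prop :=
  exists g : nat -> nat, (forall x, g (f x) = x) /\ (forall x, f (g x) = x).

Definition is_subgroup (G : (nat -> nat) -> Prop) : Prop :=
  (forall f, G f -> is_perm f) /\
  G (fun x => x) /\
  (forall f g, G f -> G g -> G (fun x => f (g x))) /\
  (forall f g, G f -> (forall x, g (f x) = x) -> (forall x, f (g x) = x) -> G g).

(* G is closed in S_infinity for the topology of pointwise convergence:
   basic neighbourhoods of f are {g | g agrees with f on {0,...,n-1}}. *)
Definition is_closed_in_Sinf (G : (nat -> nat) -> Prop) : Prop :=
  forall f, is_perm f ->
    (forall n, exists g, G g /\ forall i, i < n -> g i = f i) -> G f.

Definition rel2 := nat * nat -> Prop.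
Definition quant2 := rel2 -> Prop.

(* Q closed in 2^(N^2) (product topology): basic neighbourhoods of A are
   {B | B agrees with A on {0..n-1}^2}. *)
Definition q_closed (Q : quant2) : Prop :=
  forall A : rel2,
    (forall n, exists B, Q B /\
        forall a b, a < n -> b < n -> (B (a, b) <-> A (a, b))) -> Q A.

Definition q_down_closed (Q : quant2) : Prop :=
  forall A B : rel2, Q A -> (forall z, B z -> A z) -> Q B.

Definition img2 (p : nat -> nat) (A : rel2) : rel2 :=
  fun z => exists a, A a /\ z = (p (fst a), p (snd a)).

(* p : n -> N (only values below n matter) is compatible with Q. *)
Definition compatible (Q : quant2) (n : nat) (p : nat -> nat) : Prop :=
  forall A : rel2, (forall a b, A (a, b) -> a < n /\ b < n) ->
    (Q A <-> Q (img2 p A)).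

Definition fixes (Q : quant2) (f : nat -> nat) : Prop :=
  forall A : rel2, Q A <-> Q (img2 f A).

Definition in_Aut (Q : quant2) (f : nat -> nat) : Prop := is_perm f /\ fixes Q f.

Definition inj_below (n : nat) (p : nat -> nat) : Prop :=
  forall i j, i < n -> j < n -> p i = p j -> i = j.

Definition good (Q : quant2) : Prop :=
  q_closed Q /\ q_down_closed Q /\
  forall n p, inj_below n p -> compatible Q n p ->
    exists f, in_Aut Q f /\ forall i, i < n -> f i = p i.

(* Main.v *)
Require Import Defs.
From Stdlib Require Import Arith Lia.

Definition Cg (g : nat -> nat) : rel2 :=
  fun z => z = (g 0, g 0) \/ exists i, z = (g i, g (S i)).

Definition QG (G : (nat -> nat) -> Prop) : quant2 :=
  fun A => forall m, exists g, G g /\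
    forall a b, a < m -> b < m -> A (a, b) -> Cg g (a, b).

Lemma perm_inj f : is_perm f -> forall x y, f x = f y -> x = y.
Proof. intros [h [H1 H2]] x y E. rewrite <- (H1 x), <- (H1 y), E. reflexivity. Qed.

Lemma bound (p : nat -> nat) n : exists m, forall i, i <= n -> p i < m.
Proof.
  induction n as [|n [m Hm]].
  - exists (S (p 0)). intros i Hi. assert (i = 0) by lia. subst. lia.
  - exists (S (m + p (S n))). intros i Hi.
    destruct (Nat.eq_dec i (S n)). subst; lia. specialize (Hm i ltac:(lia)). lia.
Qed.

Lemma key g p n : is_perm g ->
  Cg g (p 0, p 0) ->
  (forall i, i < n -> Cg g (p i, p (S i)) /\ p i <> p (S i)) ->
  forall i, i <= n -> p i = g i.
Proof.
  intros Hg H0 Hs. pose proof (perm_inj g Hg) as Ig.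
  induction i as [|i IH]; intros Hi.
  - destruct H0 as [E | [j E]]; injection E; intros; auto.
    assert (j = S j) by (apply Ig; congruence). lia.
  - destruct (Hs i ltac:(lia)) as [[E | [j E]] Hne]; injection E; intros E1 E2.
    + exfalso. apply Hne. rewrite IH by lia. congruence.
    + rewrite IH in E2 by lia. apply Ig in E2. subst. auto.
Qed.

Lemma Cg_comp h g a b : Cg g (a, b) -> Cg (fun x => h (g x)) (h a, h b).
Proof.
  intros [E | [i E]]; injection E; intros; subst.
  - left; auto.
  - right; exists i; auto.
Qed.

Lemma G_fixes G : is_subgroup G -> forall h, G h -> forall A, QG G A -> QG G (img2 h A).
Proof.
  intros [Hp [Hid [Hc Hi]]] h Hh A HA m.
  destruct (Hp h Hh) as [hi [H1 H2]].
  destruct (bound hi m) as [m' Hm'].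
  destruct (HA m') as [g [Gg Hg]].
  exists (fun x => h (g x)). split. apply Hc; auto.
  intros a b Ha Hb [[a' b'] [HA' E]]. simpl in E. injection E; intros; subst.
  apply Cg_comp. apply Hg; auto.
  - rewrite <- (H1 a'). specialize (Hm' (h a') ltac:(lia)). lia.
  - rewrite <- (H1 b'). specialize (Hm' (h b') ltac:(lia)). lia.
Qed.

Lemma QG_down G A B : QG G A -> (forall z, B z -> A z) -> QG G B.
Proof.
  intros HA HB m. destruct (HA m) as [g [Gg Hg]]. exists g. split; auto.
Qed.

Lemma aut_iff G : is_subgroup G -> is_closed_in_Sinf G ->
  forall f, in_Aut (QG G) f <-> G f.
Proof.
  intros HG Hcl f. split.
  - intros [Pf Ff]. apply Hcl; auto. intros n.
    assert (Hq : QG G (Cg (fun x => x))).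
    { intros m. exists (fun x => x). split. apply HG. auto. }
    apply Ff in Hq.
    destruct (bound f n) as [m Hm].
    destruct (Hq m) as [g [Gg Hg]].
    exists g. split; auto.
    assert (Pg : is_perm g) by (apply HG; auto).
    intros i Hi. symmetry. apply (key g f n Pg); try lia.
    + apply Hg; try (apply Hm; lia). exists (0,0). split; auto. left; auto.
    + intros j Hj. split.
      * apply Hg; try (apply Hm; lia). exists (j, S j). split; auto. right. exists j; auto.
      * intro E. apply perm_inj in E; auto. lia.
  - intros Gf. pose proof HG as [Hp [Hid [Hc Hi]]]. split. auto.
    destruct (Hp f Gf) as [fi [H1 H2]].
    intros A. split. apply G_fixes; auto.
    intros HA. apply (G_fixes G HG fi (Hi f fi Gf H1 H2)) in HA.
    eapply QG_down. apply HA. intros [a b] Hab.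
    exists (f a, f b). split. exists (a, b). auto. simpl. rewrite !H1. auto.
Qed.

Theorem proposition13 (G : (nat -> nat) -> Prop) :
  is_subgroup G -> is_closed_in_Sinf G ->
  exists Q : quant2, good Q /\ (forall f, in_Aut Q f <-> G f).
Proof.
  intros HG Hcl. exists (QG G). split; [|apply aut_iff; auto].
  split; [|split].
  - intros A HA m. destruct (HA m) as [B [HB Hag]]. destruct (HB m) as [g [Gg Hg]].
    exists g. split; auto. intros a b Ha Hb HAb. apply Hg; auto. apply Hag; auto.
  - intros A B HA HB. eapply QG_down; eauto.
  - intros n p Hinj Hcomp. destruct n as [|k].
    + exists (fun x => x). split. apply aut_iff; auto. apply HG. intros; lia.
    + set (A := fun z : nat * nat => z = (0,0) \/ exists i, i < k /\ z = (i, S i)).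
      assert (HA : QG G A).
      { intros m. exists (fun x => x). split. apply HG.
        intros a b _ _ [E | [i [_ E]]]; [left | right; exists i]; auto. }
      apply Hcomp in HA.
      2:{ intros a b [E | [i [Hi E]]]; injection E; intros; subst; lia. }
      destruct (bound p k) as [m Hm].
      destruct (HA m) as [g [Gg Hg]].
      assert (Pg : is_perm g) by (apply HG; auto).
      exists g. split. apply aut_iff; auto.
      intros i Hi. symmetry. apply (key g p k Pg); try lia.
      * apply Hg; try (apply Hm; lia). exists (0,0). split; auto. left; auto.
      * intros j Hj. split.
        -- apply Hg; try (apply Hm; lia). exists (j, S j). split; auto. right. exists j; auto.
        -- intro E. apply Hinj in E; lia.
Qed.
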